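(* Let $(\mathbf A,\tau)$ be a state-morphism algebra. For every congruence $\phi$ of the subalgebra $\tau(\mathbf A)$, the relation $\theta_\phi=\{(x,y)\in A\times A:(\tau(x),\tau(y))\in\phi\}$ is a congruence of $(\mathbf A,\tau)$ and $\theta_\phi\cap\tau(A)^2=\phi$. In addition, $\theta_\tau=\{(x,y)\in A\times A:\tau(x)=\tau(y)\}$ is a congruence of $(\mathbf A,\tau)$, $\phi\subseteq\theta_\phi$, and $\Theta_\tau(\phi)\subseteq\theta_\phi$.
   Context: Let $F$ be an arbitrary algebraic type. A state-morphism on an algebra $\mathbf A$ of type $F$ is an endomorphism $\tau:\mathbf A\to\mathbf A$ with $\tau\circ\tau=\tau$; the pair $(\mathbf A,\tau)$, viewed as an algebra of type $F$ extended by the unary operation $\tau$, is a state-morphism algebra. $\tau(A)=\{\tau(x):x\in A\}$ is the universe of a subalgebra $\tau(\mathbf A)$ of $\mathbf A$. $\mathrm{Con}(\mathbf A,\tau)$ denotes the congruences of $\mathbf A$ compatible with $\tau$. For $\phi\subseteq A^2$, $\Theta_\tau(\phi)$ denotes the congruence of $(\mathbf A,\tau)$ generated by $\phi$. *)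

(* Defs.v *)
From Stdlib Require Import FunctionalExtensionality.
From mathcomp Require Import all_boot.

Set Implicit Arguments.
Unset Strict Implicit.
Unset Printing Implicit Defensive.

Record alg_type := AlgType { op_sym : Type; arity : op_sym -> nat }.

Record algebra (F : alg_type) := Algebra {
  carrier :> Type;
  ops : forall o : op_sym F, ('I_(arity o) -> carrier) -> carrier }.
Arguments ops {F} a o _ : rename.

Definition endomorphism F (A : algebra F) (f : A -> A) : Prop :=
  forall (o : op_sym F) (args : 'I_(arity o) -> A), f (ops A o args) = ops A o (fun i => f (args i)).

Definition state_morphism F (A : algebra F) (tau : A -> A) : Prop :=
  endomorphism tau /\ (forall x, tau (tau x) = tau x).

Definition compatible F (A : algebra F) (R : A -> A -> Prop) : Prop :=
  forall (o : op_sym F) (a b : 'I_(arity o) -> A),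
    (forall i, R (a i) (b i)) -> R (ops A o a) (ops A o b).

Definition congruence F (A : algebra F) (R : A -> A -> Prop) : Prop :=
  [/\ (forall x, R x x), (forall x y, R x y -> R y x),
      (forall x y z, R x y -> R y z -> R x z) & compatible R].

Definition sm_congruence F (A : algebra F) (tau : A -> A) (R : A -> A -> Prop) : Prop :=
  congruence R /\ (forall x y, R x y -> R (tau x) (tau y)).

Definition Theta_tau F (A : algebra F) (tau : A -> A) (phi : A -> A -> Prop) : A -> A -> Prop :=
  fun x y => forall R, sm_congruence tau R -> (forall a b, phi a b -> R a b) -> R x y.

Definition op_closed F (A : algebra F) (P : A -> Prop) : Prop :=
  forall (o : op_sym F) (args : 'I_(arity o) -> A), (forall i, P (args i)) -> P (ops A o args).

Definition subalgebra F (A : algebra F) (P : A -> Prop) (HP : op_closed P) : algebra F :=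
  @Algebra F {x : A | P x}
    (fun o args => exist P (ops A o (fun i => proj1_sig (args i)))
                            (HP o _ (fun i => proj2_sig (args i)))).

Definition in_image F (A : algebra F) (tau : A -> A) (x : A) : Prop := exists y, x = tau y.

Lemma image_closed F (A : algebra F) (tau : A -> A) :
  state_morphism tau -> op_closed (in_image tau).
Proof.
move=> [Hend Hid] o args Hargs.
exists (ops A o args); rewrite Hend; congr (ops A o _).
apply: functional_extensionality => i.
have [y ->] := Hargs i; by rewrite Hid.
Qed.

Definition tau_subalg F (A : algebra F) (tau : A -> A) (H : state_morphism tau) : algebra F :=
  subalgebra (image_closed H).

Definition tau_corestr F (A : algebra F) (tau : A -> A) (x : A) : {y : A | in_image tau y} :=
  exist (in_image tau) (tau x) (ex_intro _ x erefl).

Definition theta_phi F (A : algebra F) (tau : A -> A)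
  (phi : {y : A | in_image tau y} -> {y : A | in_image tau y} -> Prop) : A -> A -> Prop :=
  fun x y => phi (tau_corestr tau x) (tau_corestr tau y).

Definition theta_tau F (A : algebra F) (tau : A -> A) : A -> A -> Prop :=
  fun x y => tau x = tau y.

(* phi as a relation on A (subset of tau(A)^2 contained in A^2) *)
Definition ext_rel F (A : algebra F) (tau : A -> A)
  (phi : {y : A | in_image tau y} -> {y : A | in_image tau y} -> Prop) : A -> A -> Prop :=
  fun x y => exists a b, proj1_sig a = x /\ proj1_sig b = y /\ phi a b.

(* Main.v *)
Require Import Defs.
From mathcomp Require Import all_boot.
From Stdlib Require Import ProofIrrelevance FunctionalExtensionality.

Lemma sig_eq_pi (T : Type) (P : T -> Prop) (a b : {x : T | P x}) :
  proj1_sig a = proj1_sig b -> a = b.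
Proof.
case: a b => [x px] [y py] /= E; subst y; by rewrite (proof_irrelevance _ px py).
Qed.

Theorem lemma3p2 (F : alg_type) (A : algebra F) (tau : A -> A)
  (Hsm : state_morphism tau)
  (phi : tau_subalg Hsm -> tau_subalg Hsm -> Prop)
  (Hphi : congruence phi) :
  [/\ sm_congruence tau (theta_phi phi),
      (forall a b : tau_subalg Hsm,
          theta_phi phi (proj1_sig a) (proj1_sig b) <-> phi a b),
      sm_congruence tau (theta_tau tau),
      (forall a b : tau_subalg Hsm, phi a b -> theta_phi phi (proj1_sig a) (proj1_sig b))
    & (forall x y : A, Theta_tau tau (ext_rel phi) x y -> theta_phi phi x y)].
Proof.
have Hsm' := Hsm; case: Hsm' => Hend Hid.
case: Hphi => Hr Hs Ht Hc.
have Hfix : forall a : tau_subalg Hsm, tau_corestr tau (proj1_sig a) = a.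
  move=> a; apply: sig_eq_pi => /=; case: a => x Px /=; case: Px => y E; rewrite E; exact: Hid.
have Hops : forall o (a : 'I_(arity o) -> A),
    tau_corestr tau (ops A o a) = ops (tau_subalg Hsm) o (fun i => tau_corestr tau (a i)).
  move=> o a; apply: sig_eq_pi => /=; exact: Hend.
have Hcorid : forall x, tau_corestr tau (tau x) = tau_corestr tau x.
  move=> x; apply: sig_eq_pi => /=; exact: Hid.
have C1 : sm_congruence tau (theta_phi phi).
  split; [split|].
  - move=> x; exact: Hr.
  - move=> x y; exact: Hs.
  - move=> x y z; exact: Ht.
  - move=> o a b H; rewrite /theta_phi !Hops; exact: Hc.
  - move=> x y; rewrite /theta_phi !Hcorid //.
have C2 : forall a b : tau_subalg Hsm,
    theta_phi phi (proj1_sig a) (proj1_sig b) <-> phi a b.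
  by move=> a b; rewrite /theta_phi !Hfix.
split => //.
- split; [split|].
  + by move=> x.
  + by move=> x y.
  + by move=> x y z; rewrite /theta_tau => -> .
  + move=> o a b H; rewrite /theta_tau !Hend; congr (ops A o _).
    apply: functional_extensionality => i; exact: H.
  + by move=> x y; rewrite /theta_tau !Hid.
- by move=> a b /C2.
- move=> x y H; apply: H => //.
  move=> a b [a' [b' [<- [<- Hab]]]]; exact/C2.
Qed.
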